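(* Let $V\in\mathbb{C}^{N\times N}$ be unitary and $b\in\mathbb{C}^N$ nonzero. Define, in exact arithmetic, the unitary Arnoldi process: $q_1=b/\|b\|_2$, $q_0=0$, $u_{01}=0$, and for $k=1,2,\dots,n$: $$v_k=Vq_k,\qquad u_{k-1,k}=-\frac{q_{k-1}^*v_k}{q_{k-1}^*v_{k-1}}\ (k>1),\qquad l_{kk}=q_k^*v_k+u_{k-1,k}\,q_k^*v_{k-1},$$ $$\tilde q_{k+1}=v_k-l_{kk}q_k+u_{k-1,k}v_{k-1},\qquad l_{k+1,k}=\|\tilde q_{k+1}\|_2,\qquad q_{k+1}=\tilde q_{k+1}/l_{k+1,k}$$ (with $v_0=0$). Assume that for $k=1,\dots,n$ no breakdown occurs, i.e. $l_{k+1,k}\neq0$ and $q_{k-1}^*v_{k-1}\neq0$ for $k>1$. Then for each $k\le n$: the vectors $q_1,\dots,q_{k+1}$ are orthonormal and $q_1,\dots,q_k$ span the Krylov subspace $\mathrm{span}\{b,Vb,\dots,V^{k-1}b\}$; with $Q_k=[q_1,\dots,q_k]$, $L_k$ the $k\times k$ lower bidiagonal matrix with diagonal entries $l_{jj}$ and subdiagonal entries $l_{j+1,j}$, $U_k$ the $k\times k$ upper bidiagonal matrix with unit diagonal and superdiagonal entries $u_{j-1,j}$, and $\hat L_k$ the $(k+1)\times k$ matrix obtained by appending the row $l_{k+1,k}e_k^T$ to $L_k$, one has $$VQ_kU_k=Q_kL_k+l_{k+1,k}q_{k+1}e_k^T=Q_{k+1}\hat L_k,$$ and the matrix $\hat L_kU_k^{-1}$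 has orthonormal columns.
   Context: $e_k$ denotes the $k$-th standard unit vector. All computations are in exact arithmetic. *)

(* Defs.v *)
From HB Require Import structures.
From mathcomp Require Import all_boot all_order all_algebra.
From mathcomp Require Import sesquilinear spectral.
Set Implicit Arguments. Unset Strict Implicit. Unset Printing Implicit Defensive.
Import Order.TTheory GRing.Theory Num.Theory Num.Def.
Local Open Scope ring_scope.

Section UnitaryArnoldi.
Variables (C : numClosedFieldType) (N : nat) (V : 'M[C]_N) (b : 'cV[C]_N).

Definition adjmx m n (A : 'M[C]_(m, n)) : 'M[C]_(n, m) := (map_mx conjC A)^T.

Definition cdot (x y : 'cV[C]_N) : C := \sum_i (x i 0)^* * y i 0.

Definition norm2 (x : 'cV[C]_N) : C := sqrtC (\sum_i `|x i 0| ^+ 2).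

(* One step of the recursion, at (1-based) index k, given qp = q_{k-1} and
   qc = q_k (with v_j = V q_j, so v_0 = V q_0 = 0). *)
Definition u_of (k : nat) (qp qc : 'cV[C]_N) : C :=
  if (k <= 1)%N then 0
  else - (cdot qp (V *m qc) / cdot qp (V *m qp)).

Definition ldiag_of (k : nat) (qp qc : 'cV[C]_N) : C :=
  cdot qc (V *m qc) + u_of k qp qc * cdot qc (V *m qp).

Definition qtilde_of (k : nat) (qp qc : 'cV[C]_N) : 'cV[C]_N :=
  V *m qc - ldiag_of k qp qc *: qc + u_of k qp qc *: (V *m qp).

Definition next_q (k : nat) (qp qc : 'cV[C]_N) : 'cV[C]_N :=
  (norm2 (qtilde_of k qp qc))^-1 *: qtilde_of k qp qc.

(* qpair k = (q_k, q_{k+1}); q_0 = 0, q_1 = b / ||b||_2 *)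
Fixpoint qpair (k : nat) : 'cV[C]_N * 'cV[C]_N :=
  match k with
  | 0 => (0, (norm2 b)^-1 *: b)
  | k'.+1 => let: (qp, qc) := qpair k' in (qc, next_q k'.+1 qp qc)
  end.

Definition q (k : nat) : 'cV[C]_N := (qpair k).1.
Definition v (k : nat) : 'cV[C]_N := V *m q k.
(* u k = u_{k-1,k}, ldiag k = l_{kk}, qtilde k = \tilde q_{k+1}, lsub k = l_{k+1,k} *)
Definition u (k : nat) : C := u_of k (q k.-1) (q k).
Definition ldiag (k : nat) : C := ldiag_of k (q k.-1) (q k).
Definition qtilde (k : nat) : 'cV[C]_N := qtilde_of k (q k.-1) (q k).
Definition lsub (k : nat) : C := norm2 (qtilde k).

Definition Qmx (k : nat) : 'M[C]_(N, k) := \matrix_(i < N, j < k) q j.+1 i 0.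

Definition Lmx (k : nat) : 'M[C]_k :=
  \matrix_(i < k, j < k)
    (if i == j :> nat then ldiag j.+1
     else if i == j.+1 :> nat then lsub j.+1 else 0).

Definition Umx (k : nat) : 'M[C]_k :=
  \matrix_(i < k, j < k)
    (if i == j :> nat then 1
     else if j == i.+1 :> nat then u j.+1 else 0).

Definition Lhat (k : nat) : 'M[C]_(k.+1, k) :=
  \matrix_(i < k.+1, j < k)
    (if i == j :> nat then ldiag j.+1
     else if i == j.+1 :> nat then lsub j.+1 else 0).

Definition ekT (k : nat) : 'rV[C]_k := \row_(j < k) (j == k.-1 :> nat)%:R.

Definition krylov (k : nat) : 'M[C]_(N, k) :=
  \matrix_(i < N, j < k) ((V ^+ j) *m b) i 0.

End UnitaryArnoldi.

(* Main.v *)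
Require Import Defs.
From HB Require Import structures.
From mathcomp Require Import all_boot all_order all_algebra.
From mathcomp Require Import sesquilinear spectral.
From mathcomp Require Import ring zify.
Set Implicit Arguments. Unset Strict Implicit. Unset Printing Implicit Defensive.
Import Order.TTheory GRing.Theory Num.Theory.
Local Open Scope ring_scope.

Section Basics.
Variables (C : numClosedFieldType) (N : nat).
Implicit Types x y : 'cV[C]_N.

Lemma cc (a : C) : a^*^* = a. Proof. exact: conjCK. Qed.

Lemma cdotDr x y z : cdot x (y + z) = cdot x y + cdot x z.
Proof. by rewrite /cdot -big_split; apply: eq_bigr => i _; rewrite mxE mulrDr. Qed.
Lemma cdotZr x y a : cdot x (a *: y) = a * cdot x y.
Proof. by rewrite /cdot big_distrr; apply: eq_bigr => i _; rewrite mxE mulrCA. Qed.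
Lemma cdotDl x y z : cdot (x + y) z = cdot x z + cdot y z.
Proof. by rewrite /cdot -big_split; apply: eq_bigr => i _; rewrite mxE rmorphD mulrDl. Qed.
Lemma cdotZl x y a : cdot (a *: x) y = a^* * cdot x y.
Proof. by rewrite /cdot big_distrr; apply: eq_bigr => i _; rewrite mxE rmorphM -mulrA. Qed.
Lemma cdot0l y : cdot 0 y = 0.
Proof. by rewrite /cdot big1 // => i _; rewrite mxE rmorph0 mul0r. Qed.
Lemma cdot0r y : cdot y 0 = 0.
Proof. by rewrite /cdot big1 // => i _; rewrite mxE mulr0. Qed.
Lemma cdotC x y : cdot y x = (cdot x y)^*.
Proof. by rewrite /cdot rmorph_sum; apply: eq_bigr => i _; rewrite rmorphM /= cc mulrC. Qed.
Lemma cdotNr x y : cdot x (- y) = - cdot x y.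
Proof. by rewrite -scaleN1r cdotZr mulN1r. Qed.
Lemma cdotBr x y z : cdot x (y - z) = cdot x y - cdot x z.
Proof. by rewrite cdotDr cdotNr. Qed.

Lemma cdot_adj (W : 'M[C]_N) x y : cdot x (W *m y) = cdot (adjmx W *m x) y.
Proof.
rewrite /cdot; under eq_bigr do rewrite mxE big_distrr.
rewrite exchange_big; apply: eq_bigr => j _ /=.
rewrite !mxE rmorph_sum big_distrl; apply: eq_bigr => i _ /=.
by rewrite !mxE rmorphM /= cc mulrCA mulrA.
Qed.

Lemma cdot_self x : cdot x x = \sum_i `|x i 0| ^+ 2.
Proof. by apply: eq_bigr => i _; rewrite normCK mulrC. Qed.

Lemma unit_norm x : norm2 x != 0 -> cdot ((norm2 x)^-1 *: x) ((norm2 x)^-1 *: x) = 1.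
Proof.
move=> nz; rewrite cdotZl cdotZr cdot_self mulrA.
have s0 : 0 <= \sum_i `|x i 0| ^+ 2 by apply: sumr_ge0 => i _; rewrite exprn_ge0.
have sq0 : 0 <= norm2 x by rewrite /norm2 sqrtC_ge0.
rewrite (geC0_conj (x := (norm2 x)^-1)) ?invr_ge0 //.
rewrite -expr2 exprVn /norm2 sqrtCK mulVf //.
by apply: contraNneq nz => H; rewrite /norm2 H sqrtC0.
Qed.

Lemma norm2_neq0 x : x != 0 -> norm2 x != 0.
Proof.
move=> nz; rewrite /norm2 sqrtC_eq0; apply: contraNneq nz => /eqP.
rewrite psumr_eq0 => [/allP H|i _]; last by rewrite exprn_ge0.
apply/eqP/matrixP => i j; rewrite ord1 mxE.
have := H i (mem_index_enum _); rewrite /= sqrf_eq0 normr_eq0 => /eqP //.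
Qed.


Lemma sum_delta k (t : nat) (x : C) :
  \sum_(l < k) (if (l == t :> nat) then x else 0) = if (t < k)%N then x else 0.
Proof.
case: ifP => tk.
  rewrite (bigD1 (Ordinal tk)) //= eqxx big1 ?addr0 // => l /eqP nl.
  by rewrite ifN //; apply/eqP => e; apply: nl; apply: val_inj.
by rewrite big1 // => l _; rewrite ifN //; apply/eqP => e; rewrite -e ltn_ord in tk.
Qed.

Lemma sum_band k (H : nat -> C) (j : nat) : (j < k)%N ->
  (forall l : nat, l != j -> l != j.+1 -> l.+1 != j -> H l = 0) ->
  \sum_(l < k) H l = H j + (if (j.+1 < k)%N then H j.+1 else 0)
     + (if (0 < j)%N then H j.-1 else 0).
Proof.
move=> jk Hz.
rewrite (eq_bigr (fun l : 'I_k => (if (l == j :> nat) then H j else 0)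
   + (if (l == j.+1 :> nat) then H j.+1 else 0)
   + (if (l == j.-1 :> nat) then (if (0 < j)%N then H j.-1 else 0) else 0))); last first.
  move=> l _; case: (eqVneq (l : nat) j) => [->|a].
    rewrite ifN; last by apply/eqP; lia.
    case: j {jk Hz} => [|j] /=; rewrite ?addr0 //; rewrite ifN ?addr0 //; apply/eqP; lia.
  case: (eqVneq (l : nat) j.+1) => [->|c].
    by rewrite add0r ifN ?addr0 //; apply/eqP; lia.
  case: (eqVneq (l : nat) j.-1) => [e|d].
    case: (posnP j) => [j0|jp]; first by move: a; rewrite e j0.
    by rewrite e !add0r.
  rewrite Hz // ?add0r ?addr0 //; apply/eqP; lia.
rewrite !big_split /= !sum_delta jk.
case: (posnP j) => [->|jp]; first by rewrite /= if_same.
by rewrite (_ : (j.-1 < k)%N = true) //; lia.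
Qed.

Lemma entD m k (A B : 'M[C]_(m, k)) i j : (A + B) i j = A i j + B i j.
Proof. by rewrite mxE. Qed.
Lemma entZ m k a (A : 'M[C]_(m, k)) i j : (a *: A) i j = a * A i j.
Proof. by rewrite mxE. Qed.

Lemma adjmxM m k p (A : 'M[C]_(m, k)) (B : 'M[C]_(k, p)) :
  adjmx (A *m B) = adjmx B *m adjmx A.
Proof. by rewrite /adjmx map_mxM trmx_mul. Qed.

Definition Kin (V : 'M[C]_N) (b : 'cV[C]_N) m x :=
  exists c : nat -> C, x = \sum_(i < m) c i *: (V ^+ i *m b).

Section Kry.
Variables (V : 'M[C]_N) (b : 'cV[C]_N).

Lemma Kin0 m : Kin V b m 0.
Proof. by exists (fun _ => 0); rewrite big1 // => i _; rewrite scale0r. Qed.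

Lemma KinD m x y : Kin V b m x -> Kin V b m y -> Kin V b m (x + y).
Proof.
move=> [c ->] [d ->]; exists (fun i => c i + d i).
by rewrite -big_split; apply: eq_bigr => i _; rewrite scalerDl.
Qed.

Lemma KinZ m a x : Kin V b m x -> Kin V b m (a *: x).
Proof.
move=> [c ->]; exists (fun i => a * c i).
by rewrite scaler_sumr; apply: eq_bigr => i _; rewrite scalerA.
Qed.

Lemma KinN m x : Kin V b m x -> Kin V b m (- x).
Proof. by move=> h; rewrite -scaleN1r; apply: KinZ. Qed.

Lemma Kin_mono m m' x : (m <= m')%N -> Kin V b m x -> Kin V b m' x.
Proof.
move=> mm [c ->]; exists (fun i => if (i < m)%N then c i else 0).
rewrite (big_ord_widen m' (fun i => c i *: (V ^+ i *m b))) // big_mkcond /=.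
by apply: eq_bigr => i _; case: ifP => //; rewrite scale0r.
Qed.

Lemma KinV m x : Kin V b m x -> Kin V b m.+1 (V *m x).
Proof.
move=> [c ->]; exists (fun i => if i is i'.+1 then c i' else 0).
rewrite big_ord_recl /= scale0r add0r mulmx_sumr; apply: eq_bigr => i _.
by rewrite -scalemxAr mulmxA exprS mulmxE.
Qed.

Lemma Kinb : Kin V b 1 b.
Proof. by exists (fun _ => 1); rewrite big_ord1 scale1r expr0 mul1mx. Qed.



End Kry.

End Basics.

Section Main.
Variables (C : numClosedFieldType) (N n : nat) (V : 'M[C]_N) (b : 'cV[C]_N).
Hypothesis HV : V \is unitarymx.
Hypothesis Hb : b != 0.
Hypothesis Hs : forall k, (1 <= k <= n)%N -> lsub V b k != 0.
Hypothesis Hd : forall k, (1 < k <= n)%N -> cdot (q V b k.-1) (v V b k.-1) != 0.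

Local Notation qq := (q V b).
Local Notation uu := (u V b).
Local Notation ll := (ldiag V b).
Local Notation ss := (lsub V b).

Lemma qpair_snd k : (qpair V b k).2 = qq k.+1.
Proof. by rewrite /q /=; case: (qpair V b k). Qed.

Lemma qSS k : qq k.+2 = next_q V k.+1 (qq k) (qq k.+1).
Proof.
by rewrite -qpair_snd /= -qpair_snd /q; case: (qpair V b k).
Qed.

Lemma q0 : qq 0 = 0. Proof. by []. Qed.
Lemma q1 : qq 1 = (norm2 b)^-1 *: b. Proof. by []. Qed.

Lemma qS_lsub k : (1 <= k)%N -> qq k.+1 = (ss k)^-1 *: qtilde V b k.
Proof. by case: k => // k _; rewrite qSS. Qed.

Lemma relation k : (1 <= k <= n)%N ->
  V *m (qq k + uu k *: qq k.-1) = ll k *: qq k + ss k *: qq k.+1.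
Proof.
move=> /andP [k1 kn]; rewrite qS_lsub // scalerA mulfV ?Hs ?k1 //.
rewrite scale1r /qtilde /qtilde_of -/(u V b k) -/(ldiag V b k).
rewrite mulmxDr -scalemxAr.
by rewrite addrA addrCA subrr addr0.
Qed.

Lemma ldiagE k : ll k = cdot (qq k) (V *m (qq k + uu k *: qq k.-1)).
Proof. by rewrite mulmxDr -scalemxAr cdotDr cdotZr. Qed.

Lemma adjV : adjmx V *m V = 1%:M.
Proof.
have := mulmxKtV (1%:M : 'M[C]_N) HV erefl.
by rewrite mul1mx /adjmx map_trmx.
Qed.

Lemma cdotVV x y : cdot (V *m x) (V *m y) = cdot x y.
Proof. by rewrite cdot_adj mulmxA adjV mul1mx. Qed.

Lemma cdotNl (x y : 'cV[C]_N) : cdot (- x) y = - cdot x y.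
Proof. by rewrite -scaleN1r cdotZl rmorphN1 mulN1r. Qed.

Lemma sq_rel j : (1 <= j <= n)%N ->
  ss j *: qq j.+1 = V *m (qq j + uu j *: qq j.-1) - ll j *: qq j.
Proof. by move=> H; rewrite relation // addrAC subrr add0r. Qed.

Lemma cinv j : (1 <= j <= n.+1)%N -> exists c, forall x,
  (forall i, (1 <= i < j)%N -> cdot (qq i) x = 0) ->
  cdot (qq j) (V *m x) = c * cdot (qq 1) (V *m x).
Proof.
elim: j => // j IH /andP [_ jn].
case: (posnP j) => [->|jpos].
  by exists 1 => x _; rewrite mul1r.
have jn' : (1 <= j <= n)%N by rewrite jpos.
have /IH [c Hc] : (0 < j <= n.+1)%N by rewrite jpos ltnW.
exists (- ((ss j)^*^-1 * (ll j)^* * c)) => x Hx.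
have e := congr1 (fun y => cdot y (V *m x)) (sq_rel jn').
move: e; rewrite /= cdotZl cdotDl cdotNl cdotVV cdotDl cdotZl cdotZl.
rewrite (Hx j) ?jpos ?leqnn // Hc; last by move=> i /andP [i1 ij]; apply: Hx; rewrite i1 ltnW.
have -> : cdot (qq j.-1) x = 0.
  move: jpos (Hx j.-1); clear; case: j => // -[|j] _ H /=; first by rewrite q0 cdot0l.
  by rewrite H //=; lia.
have sn : (ss j)^* != 0 by rewrite conjC_eq0 Hs.
move=> e; apply: (mulfI sn); rewrite e.
field. exact sn.
Qed.

Lemma Kin_q k : Kin V b k (qq k) /\ Kin V b k.+1 (qq k.+1).
Proof.
elim: k => [|k [IH1 IH2]].
  by split; [rewrite q0; apply: Kin0 | rewrite q1; apply: KinZ; apply: Kinb].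
split => //; rewrite qS_lsub //; apply: KinZ; rewrite /qtilde /qtilde_of /=.
apply: KinD; first apply: KinD.
- exact: KinV.
- by apply: KinN; apply: KinZ; apply: Kin_mono IH2.
- by apply: KinZ; apply: Kin_mono (KinV IH1).
Qed.

Definition ortho m := forall i j, (1 <= i <= m)%N -> (1 <= j <= m)%N ->
  cdot (qq i) (qq j) = (i == j)%:R.

Lemma ortho_ne m i j : ortho m -> (1 <= i <= m)%N -> (1 <= j <= m)%N -> i != j ->
  cdot (qq i) (qq j) = 0.
Proof. by move=> H hi hj /negPf nij; rewrite H // nij. Qed.

Lemma pm_orth m i : ortho m -> (1 <= i)%N -> (i.+1 < m)%N ->
  cdot (qq i) (qq m + uu m *: qq m.-1) = 0.
Proof.
move=> H i1 im; rewrite cdotDr cdotZr (ortho_ne H) ?(ortho_ne H (j := m.-1));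
  rewrite ?mulr0 ?addr0 //; try (apply/andP; split); try lia; apply/eqP; lia.
Qed.

Lemma choice_u m : (1 < m <= n)%N ->
  cdot (qq m.-1) (V *m (qq m + uu m *: qq m.-1)) = 0.
Proof.
move=> hm; have := Hd hm; rewrite /v => hd.
rewrite mulmxDr -scalemxAr cdotDr cdotZr /u /u_of ifN; last by lia.
by field.
Qed.

Lemma new_orth m j : (1 <= m <= n)%N -> ortho m -> (1 <= j <= m)%N ->
  cdot (qq j) (qq m.+1) = 0.
Proof.
move=> hm H hj.
have sn := Hs hm.
apply: (mulfI sn); rewrite mulr0 -cdotZr sq_rel // cdotBr cdotZr.
have [->|jm] := eqVneq j m.
  by rewrite -ldiagE (H m m) ?eqxx ?mulr1 ?subrr //; lia.
have [->|jm1] := eqVneq j m.-1.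
  rewrite choice_u; last by lia.
  by rewrite (ortho_ne H) ?mulr0 ?subrr //; try lia; apply/eqP; lia.
have hjm : (j.+1 < m)%N.
  move: jm jm1 => /eqP jm /eqP jm1; lia.
rewrite (ortho_ne H (i:=j) (j:=m)) ?mulr0 ?subr0; last (by apply/eqP; lia); try lia.
set x := qq m + uu m *: qq m.-1.
have /cinv [c1 Hc1] : (1 <= m.-1 <= n.+1)%N by lia.
have /cinv [cj Hcj] : (1 <= j <= n.+1)%N by lia.
have xo : forall i, (1 <= i < m.-1)%N -> cdot (qq i) x = 0.
  by move=> i hi; apply: (pm_orth H); lia.
have Y0 : cdot (qq 1) (V *m x) = 0.
  have e1 := Hc1 x xo; rewrite /x choice_u in e1; last by lia.
  have e2 := Hc1 (qq m.-1) (fun i hi => ltac:(apply: (ortho_ne H); try lia; apply/eqP; lia)).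
  have d : (1 < m <= n)%N by lia.
  move: (Hd d); rewrite /v e2 => d'.
  have c1nz : c1 != 0 by apply: contraNneq d' => ->; rewrite mul0r.
  by move: e1 => /esym/eqP; rewrite mulf_eq0 (negPf c1nz) /= => /eqP.
by rewrite Hcj ?Y0 ?mulr0 // => i hi; apply: xo; lia.
Qed.

Lemma ortho_all m : (m <= n.+1)%N -> ortho m.
Proof.
elim: m => [_ i j|m IH hm]; first by lia.
have Hm := IH (ltnW hm).
have on1 : cdot (qq m.+1) (qq m.+1) = 1.
  case: (posnP m) => [->|mpos].
    by rewrite q1 unit_norm // norm2_neq0.
  by rewrite qS_lsub // /lsub unit_norm // -/(lsub V b m) Hs //; lia.
move=> i j hi hj.
case: (posnP m) => [m0|mpos].
  have -> : i = 1%N by lia.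
  have -> : j = 1%N by lia.
  by rewrite -m0 on1 eqxx.
have hmn : (1 <= m <= n)%N by lia.
case: (eqVneq i m.+1) => [Ei|im]; case: (eqVneq j m.+1) => [Ej|jm].
- by rewrite Ei Ej on1 eqxx.
- rewrite Ei cdotC new_orth ?rmorph0 //; last by lia.
  by rewrite eq_sym (negPf jm).
- by rewrite Ej new_orth ?(negPf im) //; lia.
- by apply: Hm; lia.
Qed.

Lemma QQ m : (m <= n.+1)%N -> adjmx (Qmx V b m) *m Qmx V b m = 1%:M.
Proof.
move=> hm; apply/matrixP => i j; rewrite !mxE.
rewrite (eq_bigr (fun l => (qq i.+1 l 0)^* * qq j.+1 l 0)); last by move=> l _; rewrite !mxE.
have := ltn_ord i; have := ltn_ord j => hj hi.
by rewrite -/(cdot (qq i.+1) (qq j.+1)) (ortho_all hm) //; lia.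
Qed.

Lemma colLHS k (i : 'I_N) (j : 'I_k) :
  (V *m Qmx V b k *m Umx V b k) i j = (V *m (qq j.+1 + uu j.+1 *: qq j)) i 0.
Proof.
pose H l := (V *m qq l.+1) i 0 *
  (if l == j :> nat then 1 else if j == l.+1 :> nat then uu j.+1 else 0).
rewrite mxE (eq_bigr (fun l : 'I_k => H l)); last first.
  move=> l _; rewrite /H [in RHS]mxE; congr (_ * _); last by rewrite mxE.
  by rewrite !mxE; apply: eq_bigr => t _; rewrite !mxE.
rewrite (@sum_band _ _ H j) //; last first.
  move=> l a c d; rewrite /H ifN // ifN ?mulr0 //; by rewrite eq_sym.
rewrite /H eqxx mulr1 mulmxDr -scalemxAr entD entZ.
rewrite (_ : (j.+1 == j :> nat) = false); last by apply/negbTE/eqP; lia.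
rewrite (_ : (j == j.+2 :> nat) = false); last by apply/negbTE/eqP; lia.
rewrite mulr0 if_same addr0.
case: (posnP j) => [j0|jp].
  by rewrite j0 q0 mulmx0 !mxE mulr0.
rewrite (_ : (j.-1 == j :> nat) = false); last by apply/negbTE/eqP; lia.
by rewrite prednK // eqxx mulrC.
Qed.

Lemma colLhat k (i : 'I_N) (j : 'I_k) :
  (Qmx V b k.+1 *m Lhat V b k) i j = ll j.+1 * qq j.+1 i 0 + ss j.+1 * qq j.+2 i 0.
Proof.
pose H l := qq l.+1 i 0 *
  (if l == j :> nat then ll j.+1 else if l == j.+1 :> nat then ss j.+1 else 0).
have jk := ltn_ord j.
rewrite mxE (eq_bigr (fun l : 'I_k.+1 => H l)); last first.
  by move=> l _; rewrite /H !mxE.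
rewrite (@sum_band _ k.+1 H j (ltnW jk)); last first.
  by move=> l a c d; rewrite /H ifN // ifN ?mulr0.
rewrite /H eqxx ifT; last by lia.
rewrite (_ : (j.+1 == j :> nat) = false); last by apply/negbTE/eqP; lia.
rewrite eqxx.
case: (posnP j) => [j0|jp].
  by rewrite addr0 mulrC [ss _ * _]mulrC.
rewrite (_ : (j.-1 == j :> nat) = false); last by apply/negbTE/eqP; lia.
rewrite (_ : (j.-1 == j.+1 :> nat) = false); last by apply/negbTE/eqP; lia.
by rewrite mulr0 addr0 mulrC [ss _ * _]mulrC.
Qed.

Lemma colLmx k (i : 'I_N) (j : 'I_k) :
  (Qmx V b k *m Lmx V b k + ss k *: (qq k.+1 *m ekT C k)) i j
   = ll j.+1 * qq j.+1 i 0 + ss j.+1 * qq j.+2 i 0.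
Proof.
pose H l := qq l.+1 i 0 *
  (if l == j :> nat then ll j.+1 else if l == j.+1 :> nat then ss j.+1 else 0).
have jk := ltn_ord j.
rewrite entD entZ mxE (eq_bigr (fun l : 'I_k => H l)); last first.
  by move=> l _; rewrite /H !mxE.
rewrite (@sum_band _ _ H j) //; last first.
  by move=> l a c d; rewrite /H ifN // ifN ?mulr0.
rewrite mxE big_ord1 !mxE.
rewrite /H eqxx.
rewrite (_ : (j.+1 == j :> nat) = false); last by apply/negbTE/eqP; lia.
rewrite eqxx.
have -> : (if (0 < j)%N then qq j.-1.+1 i 0 *
    (if j.-1 == j :> nat then ll j.+1 else if j.-1 == j.+1 :> nat then ss j.+1 else 0)
    else 0) = 0.
  case: (posnP j) => // jp.
  rewrite (_ : (j.-1 == j :> nat) = false); last by apply/negbTE/eqP; lia.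
  rewrite (_ : (j.-1 == j.+1 :> nat) = false); last by apply/negbTE/eqP; lia.
  by rewrite mulr0.
rewrite addr0 [qq j.+1 i 0 * _]mulrC.
case: ifP => jk'.
  rewrite (_ : (j == k.-1 :> nat) = false); last by apply/negbTE/eqP; lia.
  by rewrite mulr0n !mulr0 addr0 [qq j.+2 i 0 * _]mulrC.
have kj : k = j.+1 by lia.
rewrite (_ : (j == k.-1 :> nat) = true); last by apply/eqP; lia.
rewrite mulr1 addr0; move: kj; move: (nat_of_ord j) => jn -> /=; by [].
Qed.

Lemma Uunit k : Umx V b k \in unitmx.
Proof.
rewrite unitmxE -det_tr det_trig.
  by rewrite big1 ?unitr1 // => r _; rewrite !mxE eqxx.
apply/is_trig_mxP => r c rc; rewrite !mxE ifN; last by apply/eqP; lia.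
by rewrite ifN //; apply/eqP; lia.
Qed.

Lemma kryl k : (k <= n.+1)%N -> ((Qmx V b k)^T == (krylov V b k)^T)%MS.
Proof.
move=> hk.
have sub : ((Qmx V b k)^T <= (krylov V b k)^T)%MS.
  apply/row_subP => r.
  have [c E] := Kin_mono (ltn_ord r) (Kin_q r.+1).1.
  have -> : row r (Qmx V b k)^T = (qq r.+1)^T by apply/rowP => t; rewrite !mxE.
  rewrite E raddf_sum /=; apply: summx_sub => t _; rewrite linearZ /=; apply: scalemx_sub.
  have -> : (V ^+ t *m b)^T = row t (krylov V b k)^T by apply/rowP => z; rewrite !mxE.
  exact: row_sub.
rewrite -(mxrank_leqif_eq sub).2.
have h1 := (mxrank_leqif_eq sub).1.
have h2 : (\rank (Qmx V b k)^T = k).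
  apply/eqP; rewrite eqn_leq mxrank_tr rank_leq_col /=.
  have := mxrankM_maxr (adjmx (Qmx V b k)) (Qmx V b k).
  by rewrite QQ // mxrank1.
have h3 := rank_leq_row (krylov V b k)^T.
apply/eqP; lia.
Qed.

Lemma final k : (1 <= k <= n)%N ->
    [/\ adjmx (Qmx V b k.+1) *m Qmx V b k.+1 = 1%:M,
        ((Qmx V b k)^T == (krylov V b k)^T)%MS,
        V *m Qmx V b k *m Umx V b k
          = Qmx V b k *m Lmx V b k + lsub V b k *: (q V b k.+1 *m ekT C k),
        V *m Qmx V b k *m Umx V b k = Qmx V b k.+1 *m Lhat V b k
      & adjmx (Lhat V b k *m invmx (Umx V b k))
          *m (Lhat V b k *m invmx (Umx V b k)) = 1%:M].
Proof.
move=> hk.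
have E3 : V *m Qmx V b k *m Umx V b k
          = Qmx V b k *m Lmx V b k + lsub V b k *: (q V b k.+1 *m ekT C k).
  apply/matrixP => i j; rewrite colLHS colLmx relation ?entD ?entZ //.
  have := ltn_ord j; lia.
have E4 : V *m Qmx V b k *m Umx V b k = Qmx V b k.+1 *m Lhat V b k.
  apply/matrixP => i j; rewrite colLHS colLhat relation ?entD ?entZ //.
  have := ltn_ord j; lia.
split => //.
- by apply: QQ; lia.
- by apply: kryl; lia.
set A := Lhat V b k *m invmx (Umx V b k).
have e : Qmx V b k.+1 *m A = V *m Qmx V b k.
  by rewrite /A mulmxA -E4 mulmxK // Uunit.
rewrite (_ : adjmx A *m A = adjmx (Qmx V b k.+1 *m A) *m (Qmx V b k.+1 *m A)).
  by rewrite e adjmxM -mulmxA (mulmxA (adjmx V)) adjV mul1mx QQ //; lia.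
by rewrite adjmxM -mulmxA (mulmxA (adjmx (Qmx V b k.+1))) QQ ?mul1mx //; lia.
Qed.

End Main.

Theorem proposition2 (C : numClosedFieldType) (N n : nat)
    (V : 'M[C]_N) (b : 'cV[C]_N) :
  V \is unitarymx ->
  b != 0 ->
  (forall k, (1 <= k <= n)%N ->
     lsub V b k != 0 /\
     ((1 < k)%N -> cdot (q V b k.-1) (v V b k.-1) != 0)) ->
  forall k, (1 <= k <= n)%N ->
    [/\ adjmx (Qmx V b k.+1) *m Qmx V b k.+1 = 1%:M,
        ((Qmx V b k)^T == (krylov V b k)^T)%MS,
        V *m Qmx V b k *m Umx V b k
          = Qmx V b k *m Lmx V b k + lsub V b k *: (q V b k.+1 *m ekT C k),
        V *m Qmx V b k *m Umx V b k = Qmx V b k.+1 *m Lhat V b k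
      & adjmx (Lhat V b k *m invmx (Umx V b k))
          *m (Lhat V b k *m invmx (Umx V b k)) = 1%:M].
Proof.
move=> HV Hb H k hk.
have Hs : forall j, (1 <= j <= n)%N -> lsub V b j != 0.
  by move=> j hj; case: (H j hj).
have Hd : forall j, (1 < j <= n)%N -> cdot (q V b j.-1) (v V b j.-1) != 0.
  move=> j hj; have hj' : (1 <= j <= n)%N by lia.
  by case: (H j hj') => _; apply; lia.
exact: (final HV Hb Hs Hd hk).
Qed.
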